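(* Let $\mu,\nu\in\mathcal{P}(\mathcal{X})$, $0<m_1\le m_2<\infty$, $K:\mathcal{X}\times\mathcal{X}\to(0,1]$ measurable with lower decay $l$, and let $(\alpha_1,\tilde\alpha_1)$, $(\alpha_2,\tilde\alpha_2)$ be pairs of tail functions (with $\mu(B_{m_1})>0$, $\nu(B_{m_1})>0$, $\alpha_1,\alpha_2>0$). Assume \begin{align*} &l(m_2)(1-\alpha_1(m_2))-\tilde\alpha_1(m_2)\ge0,\\ &\bar a:=\sup_{r\ge m_1}\big(l(r)\nu(B_r)(1-\alpha_1(r))-\tilde\alpha_1(m_2)\big)>0,\\ &\frac{1+\tilde\alpha_1(m_2)}{\bar a}\,\nu(B_r^{\mathsf c})\le\alpha_2(r)\ \text{ for all } r\ge m_1,\\ &\frac{\tilde\alpha_1(m_2)}{\bar a}\,\nu(B_r^{\mathsf c})\le\tilde\alpha_2(r)\ \text{ for all } r\ge m_2. \end{align*} Then $L_{K,\mu}(\mathcal{F}^{\mu}_{\alpha_1,\tilde\alpha_1})\subseteq\mathcal{F}^{\nu}_{\alpha_2,\tilde\alpha_2}$ and $L_{K^\top,\nu}(\mathcal{G}^{\nu}_{\alpha_2,\tilde\alpha_2})\subseteq\mathcal{G}^{\mu}_{\alpha_1,\tilde\alpha_1}$.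
   Context: $\mathcal{X}$ is a Polish space with metric $d_{\mathcal{X}}$, $x_0$ fixed, $B_r=\{x:d_{\mathcal{X}}(x_0,x)\le r\}$, $B_r^{\mathsf c}=\mathcal{X}\setminus B_r$. A non-increasing $l:[0,\infty)\to[0,\infty)$ is a lower decay of $K$ if $\inf_{x,y\in B_r}K(x,y)\ge l(r)$ for all $r>0$. $K^\top(x,y)=K(y,x)$; $L_{K,\mu}f(x)=\int K(x,y)f(y)\,\mu(dy)$. A tail function is a non-increasing $\alpha:(0,\infty)\to[0,\infty)$ with $\lim_{r\to\infty}\alpha(r)=0$. For $\rho\in\mathcal{P}(\mathcal{X})$: $\mathcal{F}^{\rho}_{\alpha,\tilde\alpha}$ is the set of $f\in L^2(\rho)$ with $f\mathbf 1_{B_{m_2}}\ge0$ $\rho$-a.s., $\int_{B_r^{\mathsf c}}f_+\,d\rho\le\alpha(r)\int f\,d\rho$ for all $r\ge m_1$, $\int_{B_r^{\mathsf c}}f_-\,d\rho\le\tilde\alpha(r)\int f\,d\rho$ for all $r\ge m_2$; $\mathcal{G}^{\rho}_{\alpha,\tilde\alpha}=\{g\in L^2(\rho):\int fg\,d\rho\ge0\ \forall f\in\mathcal{F}^{\rho}_{\alpha,\tilde\alpha}\}$. *)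

(* Defs.v *)
From HB Require Import structures.
From mathcomp Require Import all_boot all_order all_algebra.
From mathcomp Require Import all_classical all_reals all_analysis.
Set Implicit Arguments. Unset Strict Implicit. Unset Printing Implicit Defensive.
Import Order.TTheory GRing.Theory Num.Theory.
Import numFieldNormedType.Exports.
Local Open Scope classical_set_scope.
Local Open Scope ring_scope.

Section Defs.
Context {R : realType} {d : measure_display} {X : measurableType d}.

Definition metric_open (dist : X -> X -> R) (A : set X) : Prop :=
  forall x, A x -> exists2 e : R, 0 < e & [set y | dist x y < e] `<=` A.

Definition polish_borel (dist : X -> X -> R) : Prop :=
  [/\ (forall x y, 0 <= dist x y) /\
      (forall x y, dist x y = 0 <-> x = y) /\
      (forall x y, dist x y = dist y x) /\
      (forall x y z, dist x z <= dist x y + dist y z),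
   (exists s : nat -> X, forall x (e : R), 0 < e -> exists n, dist x (s n) < e),
   (forall u : nat -> X,
      (forall e : R, 0 < e -> exists N, forall n m, (N <= n)%N -> (N <= m)%N ->
          dist (u n) (u m) < e) ->
      exists x, (fun n => dist (u n) x) @ \oo --> (0 : R))
   & @measurable d X = <<s metric_open dist >>].

Definition cball (dist : X -> X -> R) (x0 : X) (r : R) : set X :=
  [set x | dist x0 x <= r].

Definition lower_decay (dist : X -> X -> R) (x0 : X) (K : X -> X -> R)
    (l : R -> R) : Prop :=
  (forall r, 0 <= r -> 0 <= l r) /\
  (forall r s, 0 <= r -> r <= s -> l s <= l r) /\
  (forall r, 0 < r -> forall x y, cball dist x0 r x -> cball dist x0 r y ->
     l r <= K x y).

Definition tail_function (a : R -> R) : Prop :=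
  (forall r, 0 < r -> 0 <= a r) /\
  (forall r s, 0 < r -> r <= s -> a s <= a r) /\
  (a r @[r --> +oo] --> (0 : R)).

Definition L2 (rho : {measure set X -> \bar R}) (f : X -> R) : Prop :=
  measurable_fun setT f /\ (\int[rho]_x ((f x) ^+ 2)%:E < +oo)%E.

Definition Lop (K : X -> X -> R) (mu : {measure set X -> \bar R}) (f : X -> R)
    : X -> R :=
  fun x => fine (\int[mu]_y (K x y * f y)%:E).

Definition transp (K : X -> X -> R) : X -> X -> R := fun x y => K y x.

Definition Fcone (dist : X -> X -> R) (x0 : X) (m1 m2 : R)
    (rho : {measure set X -> \bar R}) (a ta : R -> R) : set (X -> R) :=
  [set f | [/\ L2 rho f,
     {ae rho, forall x, cball dist x0 m2 x -> 0 <= f x},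
     (forall r, m1 <= r ->
        (\int[rho]_(x in ~` cball dist x0 r) (Num.max (f x) 0)%:E
          <= (a r)%:E * \int[rho]_x (f x)%:E)%E)
   & (forall r, m2 <= r ->
        (\int[rho]_(x in ~` cball dist x0 r) (Num.max (- f x) 0)%:E
          <= (ta r)%:E * \int[rho]_x (f x)%:E)%E)]].

Definition Gcone (dist : X -> X -> R) (x0 : X) (m1 m2 : R)
    (rho : {measure set X -> \bar R}) (a ta : R -> R) : set (X -> R) :=
  [set g | L2 rho g /\
     forall f, Fcone dist x0 m1 m2 rho a ta f ->
       (0 <= \int[rho]_x (f x * g x)%:E)%E].

Definition abar (dist : X -> X -> R) (x0 : X) (m1 m2 : R)
    (nu : {measure set X -> \bar R}) (l a1 at1 : R -> R) : R :=
  sup [set l r * fine (nu (cball dist x0 r)) * (1 - a1 r) - at1 m2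
      | r in [set r | m1 <= r]].

End Defs.

(* Main.v *)
Require Import Defs.
From HB Require Import structures.
From mathcomp Require Import all_boot all_order all_algebra.
From mathcomp Require Import all_classical all_reals all_analysis.
From mathcomp Require Import measurable_realfun.
From mathcomp Require Import lra ring.
Import Order.TTheory GRing.Theory Num.Theory.
Import numFieldNormedType.Exports.
Local Open Scope classical_set_scope.
Local Open Scope ring_scope.

Section MaxLemmas.
Context {R : realType}.
Lemma max0_ge0 (x : R) : 0 <= Num.max x 0.
Proof. by rewrite le_max lexx orbT. Qed.
Lemma max0_norm (x : R) : `|Num.max x 0| <= `|x|.
Proof. by rewrite ger0_norm ?max0_ge0 // ge_max ler_norm normr_ge0. Qed.
Lemma max0_l (x : R) : 0 <= x -> Num.max x 0 = x.
Proof. by move=> h; rewrite (max_idPl h). Qed.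
Lemma max0_r (x : R) : x <= 0 -> Num.max x 0 = 0.
Proof. by move=> h; rewrite (max_idPr h). Qed.
Lemma max0_sub (x : R) : x = Num.max x 0 - Num.max (- x) 0.
Proof.
case: (lerP 0 x) => h.
  have e1 := max0_l x h. have e2 := max0_r (-x) ltac:(by rewrite oppr_le0).
  lra.
have e1 := max0_r x (ltW h). have e2 := max0_l (-x) ltac:(by rewrite oppr_ge0 ltW).
lra.
Qed.
Lemma max0_eq0 (x : R) : 0 <= x -> Num.max (- x) 0 = 0.
Proof. by move=> h; apply: max0_r; rewrite oppr_le0. Qed.
Lemma max0_le (x c : R) : x <= c -> 0 <= c -> Num.max x 0 <= c.
Proof. by move=> h1 h2; rewrite ge_max h1 h2. Qed.
End MaxLemmas.

Section Helpers.
Context {R : realType} {d : measure_display} {X : measurableType d}.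

Lemma EintE (mu : {measure set X -> \bar R}) D (h : X -> R) :
  measurable D -> mu.-integrable D (EFin \o h) ->
  (\int[mu]_(x in D) (h x)%:E)%E = (Rintegral mu D h)%:E.
Proof. by move=> mD ih; rewrite fineK // (integrable_fin_num mD ih). Qed.

Lemma intS (m : {measure set X -> \bar R}) D (h : X -> R) :
  measurable D -> m.-integrable setT (EFin \o h) -> m.-integrable D (EFin \o h).
Proof. by move=> mD; apply: integrableS. Qed.

Lemma splitC (mu : {measure set X -> \bar R}) D (h : X -> R) :
  measurable D -> mu.-integrable setT (EFin \o h) ->
  Rintegral mu setT h = Rintegral mu D h + Rintegral mu (~` D) h.
Proof.
move=> mD ih; rewrite -(setUv D) Rintegral_setU //.
- exact: measurableC.
- by rewrite setUv.
- by rewrite /disj_set setICr.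
Qed.

Lemma int_of_L2 (mu : probability X R) f : L2 mu f -> mu.-integrable setT (EFin \o f).
Proof.
move=> [mf If2].
have i2 : mu.-integrable setT (fun x => (f x ^+ 2)%:E).
  apply/integrableP; split.
    by apply/measurable_EFinP; exact: measurable_funX.
  under eq_integral do rewrite gee0_abs ?lee_fin ?sqr_ge0 //.
  by [].
apply: (@le_integrable _ _ _ mu setT measurableT (EFin \o f) (fun x => (1%R)%:E + (f x ^+ 2)%:E)%E).
- exact/measurable_EFinP.
- move=> x _ /=.
rewrite lee_fin; apply: le_trans (ler_norm _).
  have h2 : f x ^+ 2 = f x * f x by rewrite expr2.
  by rewrite h2; case: (lerP 0 (f x)) => h; [rewrite ger0_norm // | rewrite ltr0_norm //]; nra.
- apply: (integrableD measurableT _ i2); exact: finite_measure_integrable_cst.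
Qed.


Lemma int_norm (mu : {measure set X -> \bar R}) (h : X -> R) :
  mu.-integrable setT (EFin \o h) -> mu.-integrable setT (EFin \o (fun x => `|h x|)).
Proof.
move=> Ih; apply: (le_integrable measurableT _ _ Ih).
- apply/measurable_EFinP; apply: measurableT_comp => //.
  by apply/measurable_EFinP; exact: measurable_int Ih.
- by move=> x _ /=; rewrite normr_id.
Qed.

Lemma intKf (mu : {measure set X -> \bar R}) (K : X -> X -> R) f x :
  measurable_fun setT (fun p : X * X => K p.1 p.2) -> (forall x y, `|K x y| <= 1) ->
  mu.-integrable setT (EFin \o f) -> mu.-integrable setT (EFin \o (fun y => K x y * f y)).
Proof.
move=> mK K1 If.
have mf : measurable_fun setT f by apply/measurable_EFinP; exact: measurable_int If.
apply: (le_integrable measurableT _ _ If).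
- apply/measurable_EFinP; apply: measurable_funM => //.
  exact: (measurable_fun_pair2 x mK).
- move=> y _ /=; rewrite lee_fin normrM.
  have := K1 x y; have := normr_ge0 (f y); have := normr_ge0 (K x y); nra.
Qed.

Lemma Lop_bound (mu : {measure set X -> \bar R}) (K : X -> X -> R) f x :
  measurable_fun setT (fun p : X * X => K p.1 p.2) -> (forall x y, `|K x y| <= 1) ->
  mu.-integrable setT (EFin \o f) ->
  `|Lop K mu f x| <= Rintegral mu setT (fun y => `|f y|).
Proof.
move=> mK K1 If.
change (`|Rintegral mu setT (fun y => K x y * f y)| <= Rintegral mu setT (fun y => `|f y|)).
have := le_normr_Rintegral measurableT (@intKf mu K f x mK K1 If).
move=> /le_trans; apply.
apply: le_Rintegral => //.
- exact: int_norm (@intKf mu K f x mK K1 If).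
- exact: int_norm.
- move=> y _; rewrite normrM.
  have := K1 x y; have := normr_ge0 (f y); have := normr_ge0 (K x y); nra.
Qed.

Lemma Lop_meas (mu : probability X R) (K : X -> X -> R) f :
  measurable_fun setT (fun p : X * X => K p.1 p.2) -> (forall x y, `|K x y| <= 1) ->
  mu.-integrable setT (EFin \o f) -> measurable_fun setT (Lop K mu f).
Proof.
move=> mK K1 If.
have mf : measurable_fun setT f by apply/measurable_EFinP; exact: measurable_int If.
pose F := fun p : X * X => (K p.1 p.2 * f p.2)%:E.
have ig : (mu \x mu)%E.-integrable setT (fun p : X * X => (f p.2)%:E).
  apply/integrable12ltyP.
    by apply/measurable_EFinP; apply: measurableT_comp => //.
  rewrite /=.
  rewrite (_ : (\int[mu]_x \int[mu]_y _)%E = (\int[mu]_(x in setT) cst (\int[mu]_y `|(f y)%:E|)%E x)%E); last by apply: eq_integral.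
  rewrite integral_cst // [X in (_ * X)%E]probability_setT mule1.
  by case/integrableP: If.
have iF : (mu \x mu)%E.-integrable setT F.
  apply: (le_integrable measurableT _ _ ig).
  - apply/measurable_EFinP; apply: measurable_funM => //.
    exact: measurableT_comp.
  - move=> p _ /=; rewrite lee_fin normrM.
    have := K1 p.1 p.2; have := normr_ge0 (f p.2); have := normr_ge0 (K p.1 p.2); nra.
have := measurable_fubini_F iF.
move=> mF.
apply: (measurableT_comp (fine_measurable measurableT) mF).
Qed.

Lemma L2_bounded (nu : probability X R) (h : X -> R) C :
  measurable_fun setT h -> (forall x, `|h x| <= C) -> L2 nu h.
Proof.
move=> mh hC; split => //.
apply: (le_lt_trans (@ge0_le_integral _ _ _ nu _ measurableT _ (cst (C ^+ 2)%:E) _ _ _ _)).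
- by move=> x _; rewrite lee_fin sqr_ge0.
- apply/measurable_EFinP; exact: measurable_funX.
- exact: measurable_cst.
- move=> x _; rewrite lee_fin /=.
  rewrite -(real_normK (num_real (h x))) !expr2.
  have := hC x; have := normr_ge0 (h x); nra.
- by rewrite integral_cst //= [X in (_ * X)%E]probability_setT mule1 ltry.
Qed.

Lemma cball_meas (dist : X -> X -> R) x0 r : polish_borel dist ->
  measurable (cball dist x0 r) /\ measurable (~` cball dist x0 r).
Proof.
case=> [[d0 [d_eq [dsym dtri]]] _ _ Hm].
have o : metric_open dist (~` cball dist x0 r).
  move=> x /= hx.
  have hx' : r < dist x0 x by rewrite ltNge; apply/negP.
  exists (dist x0 x - r); first by rewrite subr_gt0.
  move=> y /= hy hyr.
  have := dtri x0 y x; rewrite (dsym y x) => t.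
  rewrite /cball /= in hyr; clear -hy t hyr; lra.
have mC : measurable (~` cball dist x0 r) by rewrite Hm; exact: sub_sigma_algebra.
split => //; rewrite -(setCK (cball dist x0 r)); exact: measurableC.
Qed.

Lemma intZ (m : {measure set X -> \bar R}) D (h : X -> R) k :
  measurable D -> m.-integrable D (EFin \o h) -> m.-integrable D (EFin \o (fun y => k * h y)).
Proof.
move=> mD Ih.
apply: (eq_integrable mD (fun x => (k%:E * (h x)%:E)%E)); last exact: integrableZl.
by move=> x _; rewrite /= EFinM.
Qed.

Lemma bounded_int (nu : probability X R) (h : X -> R) C :
  measurable_fun setT h -> (forall x, `|h x| <= C) -> nu.-integrable setT (EFin \o h).
Proof.
move=> mh hC.
apply: (le_integrable measurableT _ _ (finite_measure_integrable_cst nu C measurableT)).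
- exact/measurable_EFinP.
- move=> x _ /=; rewrite lee_fin; apply: le_trans (hC x) (ler_norm _).
Qed.

End Helpers.
Arguments EintE {R d X mu D h}.
Arguments splitC {R d X mu D h}.
Arguments intS {R d X m D h}.
Arguments int_norm {R d X mu h}.
Arguments intKf {R d X mu K f}.
Arguments Lop_bound {R d X mu K f}.
Arguments Lop_meas {R d X mu K f}.
Arguments L2_bounded {R d X nu h C}.
Arguments intZ {R d X m D h} k.
Arguments bounded_int {R d X nu h C}.


Section Part1.
Variables (R : realType) (d : measure_display) (X : measurableType d).
Variables (dist : X -> X -> R) (x0 : X) (mu nu : probability X R) (m1 m2 : R).
Variables (K : X -> X -> R) (l a1 at1 a2 at2 : R -> R).
Hypotheses (HP : polish_borel dist) (m1gt0 : 0 < m1) (m12 : m1 <= m2).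
Hypothesis mK : measurable_fun setT (fun p : X * X => K p.1 p.2).
Hypothesis K01 : forall x y, 0 < K x y <= 1.
Hypothesis Hl : lower_decay dist x0 K l.
Hypotheses (Ha1 : tail_function a1) (Hat1 : tail_function at1).
Hypotheses (Ha2 : tail_function a2) (Hat2 : tail_function at2).
Hypothesis a1pos : forall r, 0 < r -> 0 < a1 r.
Hypothesis Hm2 : 0 <= l m2 * (1 - a1 m2) - at1 m2.
Hypothesis Habar : 0 < abar dist x0 m1 m2 nu l a1 at1.
Hypothesis H2 : forall r, m1 <= r ->
     (1 + at1 m2) / abar dist x0 m1 m2 nu l a1 at1
       * fine (nu (~` cball dist x0 r)) <= a2 r.
Hypothesis H3 : forall r, m2 <= r ->
     at1 m2 / abar dist x0 m1 m2 nu l a1 at1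
       * fine (nu (~` cball dist x0 r)) <= at2 r.

Local Notation B := (cball dist x0).
Let mB r : measurable (B r) := (@cball_meas R d X dist x0 r HP).1.
Let mBc r : measurable (~` B r) := (@cball_meas R d X dist x0 r HP).2.
Let K1 x y : `|K x y| <= 1.
Proof. by have /andP[h1 h2] := K01 x y; rewrite ger0_norm // ltW. Qed.


Let int_max0 (m : {measure set X -> \bar R}) (h : X -> R) :
  m.-integrable setT (EFin \o h) -> m.-integrable setT (EFin \o (fun x => Num.max (h x) 0)).
Proof.
move=> Ih; have mh : measurable_fun setT h by apply/measurable_EFinP; exact: measurable_int Ih.
apply: (le_integrable measurableT _ _ Ih).
- apply/measurable_EFinP; exact: (measurable_maxr mh (measurable_cst _)).
- move=> x _ /=; rewrite lee_fin.
  exact: max0_norm.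
Qed.

Let int_max0N (m : {measure set X -> \bar R}) (h : X -> R) :
  m.-integrable setT (EFin \o h) -> m.-integrable setT (EFin \o (fun x => Num.max (- h x) 0)).
Proof.
move=> Ih; apply: (@int_max0 m (fun x => - h x)).
apply: (le_integrable measurableT _ _ Ih).
- apply/measurable_EFinP; apply: measurable_funN.
  by apply/measurable_EFinP; exact: measurable_int Ih.
- by move=> x _ /=; rewrite normrN.
Qed.

Variable f : X -> R.
Hypothesis Ff : Fcone dist x0 m1 m2 mu a1 at1 f.

Let If : mu.-integrable setT (EFin \o f).
Proof. by case: Ff => h _ _ _; exact: int_of_L2. Qed.

Let fp := fun y => Num.max (f y) 0.
Let fm := fun y => Num.max (- f y) 0.
Let Ifp : mu.-integrable setT (EFin \o fp). Proof. exact: int_max0. Qed.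
Let Ifm : mu.-integrable setT (EFin \o fm). Proof. exact: int_max0N. Qed.
Let fp0 y : 0 <= fp y. Proof. exact: max0_ge0. Qed.
Let fm0 y : 0 <= fm y. Proof. exact: max0_ge0. Qed.
Let fpm y : f y = fp y - fm y.
Proof. exact: max0_sub. Qed.

Let I := Rintegral mu setT f.
Let P := Rintegral mu setT fp.
Let M := Rintegral mu setT fm.

Let Htp r : m1 <= r -> Rintegral mu (~` B r) fp <= a1 r * I.
Proof.
move=> hr; case: Ff => _ _ h _; have := h r hr.
by rewrite (EintE (mBc r) (intS (mBc r) Ifp)) (EintE measurableT If) -EFinM lee_fin.
Qed.

Let Htm r : m2 <= r -> Rintegral mu (~` B r) fm <= at1 r * I.
Proof.
move=> hr; case: Ff => _ _ _ h; have := h r hr.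
by rewrite (EintE (mBc r) (intS (mBc r) Ifm)) (EintE measurableT If) -EFinM lee_fin.
Qed.

Let I0 : 0 <= I.
Proof.
have h := Htp m1 (lexx m1).
have h0 : 0 <= Rintegral mu (~` B m1) fp by apply: Rintegral_ge0 => x _; exact: fp0.
have ha := a1pos m1 m1gt0.
by have := le_trans h0 h; rewrite pmulr_rge0.
Qed.

Let PM : I = P - M.
Proof.
rewrite /I (_ : Rintegral mu setT f = Rintegral mu setT (fun y => fp y - fm y)).
  by rewrite RintegralB.
by apply: eq_Rintegral => y _; exact: fpm.
Qed.

Let M0 : 0 <= M. Proof. by apply: Rintegral_ge0 => x _; exact: fm0. Qed.

Let Mle : M <= at1 m2 * I.
Proof.
rewrite /M (splitC (mB m2) Ifm).
have -> : Rintegral mu (B m2) fm = 0.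
  rewrite /Rintegral (ae_eq_integral (cst 0%E)) ?integral0 //.
  - by apply: (measurable_funS measurableT) => //; exact: (measurable_int mu).
  - case: Ff => _ Hae _ _; move: Hae; apply: filterS => x h Bx.
    by rewrite /fm; congr EFin; apply: max0_eq0; exact: h.
by rewrite add0r; exact: Htm m2 (lexx m2).
Qed.

Let A x := Rintegral mu setT (fun y => K x y * fp y).
Let Bm x := Rintegral mu setT (fun y => K x y * fm y).
Let IKp x := intKf x mK K1 Ifp.
Let IKm x := intKf x mK K1 Ifm.

Let LfAB x : Lop K mu f x = A x - Bm x.
Proof.
change (Rintegral mu setT (fun y => K x y * f y) = A x - Bm x).
rewrite /A /Bm -RintegralB //; apply: eq_Rintegral => y _.
by rewrite fpm mulrBr.
Qed.

Let A_le x : A x <= P.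
Proof.
apply: le_Rintegral => // y _.
have /andP[k0 k1] := K01 x y; exact: ler_piMl (fp0 y) k1.
Qed.
Let A_ge0 x : 0 <= A x.
Proof.
apply: Rintegral_ge0 => y _.
have /andP[k0 k1] := K01 x y; exact: mulr_ge0 (ltW k0) (fp0 y).
Qed.
Let Bm_le x : Bm x <= M.
Proof.
apply: le_Rintegral => // y _.
have /andP[k0 k1] := K01 x y; exact: ler_piMl (fm0 y) k1.
Qed.
Let Bm_ge0 x : 0 <= Bm x.
Proof.
apply: Rintegral_ge0 => y _.
have /andP[k0 k1] := K01 x y; exact: mulr_ge0 (ltW k0) (fm0 y).
Qed.

Let A_lo r : m1 <= r -> forall x, B r x -> l r * (1 - a1 r) * I <= A x.
Proof.
move=> hr x Bx.
have r0 : 0 < r := lt_le_trans m1gt0 hr.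
have lr0 : 0 <= l r := Hl.1 r (ltW r0).
have s1 := splitC (mB r) (IKp x).
have s2 : 0 <= Rintegral mu (~` B r) (fun y => K x y * fp y).
  apply: Rintegral_ge0 => y _.
  have /andP[k0 k1] := K01 x y; exact: mulr_ge0 (ltW k0) (fp0 y).
have s3 : Rintegral mu (B r) (fun y => l r * fp y) <= Rintegral mu (B r) (fun y => K x y * fp y).
  apply: le_Rintegral => //.
  - exact: (intZ (l r) (mB r) (intS (mB r) Ifp)).
  - exact: (intS (mB r) (IKp x)).
  - move=> y By; apply: ler_wpM2r => //; exact: (Hl.2.2 r r0 x y Bx By).
have s4 := RintegralZl (l r) (mB r) (intS (mB r) Ifp).
have s5 := splitC (mB r) Ifp.
have s6 := Htp r hr.
have PI : I <= P by rewrite PM; have := M0; lra.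
have t : l r * (I - a1 r * I) <= l r * Rintegral mu (B r) fp.
  apply: ler_wpM2l => //; rewrite /P in s5 PI; lra.
have e : l r * (1 - a1 r) * I = l r * (I - a1 r * I) by ring.
rewrite /A; lra.
Qed.

Let at10 : 0 <= at1 m2.
Proof. exact: (Hat1.1 m2 (lt_le_trans m1gt0 m12)). Qed.

Let Lf_lo x : - (at1 m2 * I) <= Lop K mu f x.
Proof. rewrite LfAB; have := A_ge0 x; have := Bm_le x; have := Mle; lra. Qed.

Let Lf_up x : Lop K mu f x <= (1 + at1 m2) * I.
Proof.
rewrite LfAB; have := A_le x; have := Bm_ge0 x; have := Mle; have := PM.
have e : (1 + at1 m2) * I = I + at1 m2 * I by ring.
lra.
Qed.

Let Lf_B r : m1 <= r -> forall x, B r x ->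
  l r * (1 - a1 r) * I - at1 m2 * I <= Lop K mu f x.
Proof.
move=> hr x Bx; rewrite LfAB; have := A_lo r hr x Bx; have := Bm_le x; have := Mle; lra.
Qed.

Let mLf : measurable_fun setT (Lop K mu f) := Lop_meas mK K1 If.
Let ILf : nu.-integrable setT (EFin \o Lop K mu f) :=
  bounded_int mLf (fun x => Lop_bound x mK K1 If).

Let J := Rintegral nu setT (Lop K mu f).

Let Jr r : m1 <= r -> I * (l r * fine (nu (B r)) * (1 - a1 r) - at1 m2) <= J.
Proof.
move=> hr.
have s1 := splitC (mB r) ILf.
have t1 : Rintegral nu (B r) (fun _ => l r * (1 - a1 r) * I - at1 m2 * I)
    <= Rintegral nu (B r) (Lop K mu f).
  apply: le_Rintegral => //.
  - exact: (intS (mB r) (finite_measure_integrable_cst nu _ measurableT)).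
  - exact: (intS (mB r) ILf).
  - by move=> x Bx; exact: Lf_B r hr x Bx.
have t2 : Rintegral nu (~` B r) (fun _ => - (at1 m2 * I))
    <= Rintegral nu (~` B r) (Lop K mu f).
  apply: le_Rintegral => //.
  - exact: (intS (mBc r) (finite_measure_integrable_cst nu _ measurableT)).
  - exact: (intS (mBc r) ILf).
  - by move=> x _; exact: Lf_lo x.
rewrite !Rintegral_cst // in t1 t2.
have nB : nu (B r) = (fine (nu (B r)))%:E by rewrite fineK // fin_num_measure.
have e2 : fine (nu (~` B r)) = 1 - fine (nu (B r)).
  by rewrite probability_setC // nB -EFinB.
rewrite e2 in t2.
set b := fine (nu (B r)) in t1 t2 e2 *.
have e : (l r * (1 - a1 r) * I - at1 m2 * I) * b + - (at1 m2 * I) * (1 - b)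
  = I * (l r * b * (1 - a1 r) - at1 m2) by ring.
rewrite /J; lra.
Qed.

Let J_ge : abar dist x0 m1 m2 nu l a1 at1 * I <= J.
Proof.
case: (ltrP 0 I) => hI; last first.
  have I00 : I = 0 by apply/eqP; rewrite eq_le hI I0.
  have := Jr m1 (lexx m1); rewrite I00; lra.
rewrite -ler_pdivlMr //; apply: ge_sup.
  by eexists; exists m1 => //=.
move=> s [r hr <-]; rewrite ler_pdivlMr // mulrC; exact: Jr r hr.
Qed.

Lemma part1_main : Fcone dist x0 m1 m2 nu a2 at2 (Lop K mu f).
Proof.
have abI : 0 <= abar dist x0 m1 m2 nu l a1 at1 * I by apply: mulr_ge0 => //; exact: ltW.
split.
- exact: (L2_bounded mLf (fun x => Lop_bound x mK K1 If)).
- apply: aeW => x Bx; have := Lf_B m2 m12 x Bx.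
  have : 0 <= I * (l m2 * (1 - a1 m2) - at1 m2) by apply: mulr_ge0.
  have e : I * (l m2 * (1 - a1 m2) - at1 m2) = l m2 * (1 - a1 m2) * I - at1 m2 * I by ring.
  lra.
- move=> r hr.
  have r0 : 0 < r := lt_le_trans m1gt0 hr.
  rewrite (EintE (mBc r) (intS (mBc r) (@int_max0 nu _ ILf))) (EintE measurableT ILf) -EFinM lee_fin.
  have u : Rintegral nu (~` B r) (fun x => Num.max (Lop K mu f x) 0)
      <= Rintegral nu (~` B r) (fun _ => (1 + at1 m2) * I).
    apply: le_Rintegral => //.
    - exact: (intS (mBc r) (@int_max0 nu _ ILf)).
    - exact: (intS (mBc r) (finite_measure_integrable_cst nu _ measurableT)).
    - move=> x _; apply: max0_le; first exact: Lf_up.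
      by apply: mulr_ge0 => //; rewrite addr_ge0.
  rewrite Rintegral_cst // in u.
  have h2 := H2 r hr.
  have t1 := ler_wpM2r abI h2.
  have a20 : 0 <= a2 r := Ha2.1 r r0.
  have t2 := ler_wpM2l a20 J_ge.
  have e : (1 + at1 m2) / abar dist x0 m1 m2 nu l a1 at1 * fine (nu (~` B r))
      * (abar dist x0 m1 m2 nu l a1 at1 * I) = (1 + at1 m2) * I * fine (nu (~` B r)).
    by field; rewrite gt_eqF.
  rewrite /J in t2; lra.
- move=> r hr.
  have r0 : 0 < r := lt_le_trans m1gt0 (le_trans m12 hr).
  rewrite (EintE (mBc r) (intS (mBc r) (@int_max0N nu _ ILf))) (EintE measurableT ILf) -EFinM lee_fin.
  have u : Rintegral nu (~` B r) (fun x => Num.max (- Lop K mu f x) 0)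
      <= Rintegral nu (~` B r) (fun _ => at1 m2 * I).
    apply: le_Rintegral => //.
    - exact: (intS (mBc r) (@int_max0N nu _ ILf)).
    - exact: (intS (mBc r) (finite_measure_integrable_cst nu _ measurableT)).
    - move=> x _; apply: max0_le; last by apply: mulr_ge0.
      by have := Lf_lo x; lra.
  rewrite Rintegral_cst // in u.
  have h3 := H3 r hr.
  have t1 := ler_wpM2r abI h3.
  have a20 : 0 <= at2 r := Hat2.1 r r0.
  have t2 := ler_wpM2l a20 J_ge.
  have e : at1 m2 / abar dist x0 m1 m2 nu l a1 at1 * fine (nu (~` B r))
      * (abar dist x0 m1 m2 nu l a1 at1 * I) = at1 m2 * I * fine (nu (~` B r)).
    by field; rewrite gt_eqF.
  rewrite /J in t2; lra.
Qed.

End Part1.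

Theorem proposition4p1 (R : realType) (d : measure_display) (X : measurableType d)
  (dist : X -> X -> R) (x0 : X) (mu nu : probability X R) (m1 m2 : R)
  (K : X -> X -> R) (l a1 at1 a2 at2 : R -> R) :
  polish_borel dist ->
  0 < m1 -> m1 <= m2 ->
  measurable_fun setT (fun p : X * X => K p.1 p.2) ->
  (forall x y, 0 < K x y <= 1) ->
  lower_decay dist x0 K l ->
  tail_function a1 -> tail_function at1 ->
  tail_function a2 -> tail_function at2 ->
  (0 < mu (cball dist x0 m1))%E -> (0 < nu (cball dist x0 m1))%E ->
  (forall r, 0 < r -> 0 < a1 r) -> (forall r, 0 < r -> 0 < a2 r) ->
  0 <= l m2 * (1 - a1 m2) - at1 m2 ->
  0 < abar dist x0 m1 m2 nu l a1 at1 ->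
  (forall r, m1 <= r ->
     (1 + at1 m2) / abar dist x0 m1 m2 nu l a1 at1
       * fine (nu (~` cball dist x0 r)) <= a2 r) ->
  (forall r, m2 <= r ->
     at1 m2 / abar dist x0 m1 m2 nu l a1 at1
       * fine (nu (~` cball dist x0 r)) <= at2 r) ->
  (forall f, Fcone dist x0 m1 m2 mu a1 at1 f ->
     Fcone dist x0 m1 m2 nu a2 at2 (Lop K mu f)) /\
  (forall g, Gcone dist x0 m1 m2 nu a2 at2 g ->
     Gcone dist x0 m1 m2 mu a1 at1 (Lop (transp K) nu g)).

Proof.
move=> HP m1gt0 m12 mK K01 Hl Ha1 Hat1 Ha2 Hat2 muB nuB a1pos a2pos Hm2 Habar H2 H3.
have P1 : forall f, Fcone dist x0 m1 m2 mu a1 at1 f -> Fcone dist x0 m1 m2 nu a2 at2 (Lop K mu f).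
  by move=> f Ff; apply: (@part1_main R d X dist x0 mu nu m1 m2 K l a1 at1 a2 at2).
split => // g [L2g Gg].
have K1 : forall x y, `|K x y| <= 1.
  by move=> x y; have /andP[h1 h2] := K01 x y; rewrite ger0_norm // ltW.
have mKt : measurable_fun setT (fun p : X * X => transp K p.1 p.2).
  exact: (measurableT_comp mK (@measurable_swap _ _ X X)).
have K1t : forall x y, `|transp K x y| <= 1 by move=> x y; exact: K1.
have Ig := int_of_L2 nu g L2g.
have mg : measurable_fun setT g by case: L2g.
split.
  exact: (L2_bounded (Lop_meas mKt K1t Ig) (fun x => Lop_bound x mKt K1t Ig)).
move=> f Ff.
have G0 := Gg _ (P1 f Ff).
have [L2f _ _ _] := Ff.
have If := int_of_L2 mu f L2f.
have mf : measurable_fun setT f by case: L2f.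
suff -> : (\int[mu]_x (f x * Lop (transp K) nu g x)%:E = \int[nu]_y (Lop K mu f y * g y)%:E)%E by [].
pose Phi := fun p : X * X => (f p.1 * (K p.2 p.1 * g p.2))%:E.
pose Cg := Rintegral nu setT (fun y => `|g y|).
have iPsi : (mu \x nu)%E.-integrable setT (fun p : X * X => (f p.1 * g p.2)%:E).
  apply/integrable12ltyP.
    apply/measurable_EFinP; apply: measurable_funM.
      exact: (measurableT_comp mf measurable_fst).
    exact: (measurableT_comp mg measurable_snd).
  rewrite (_ : (\int[mu]_x \int[nu]_y _)%E = \int[mu]_x ((Cg * `|f x|)%:E))%E.
    by rewrite (EintE measurableT (intZ Cg measurableT (int_norm If))) ltry.
  apply: eq_integral => x _ /=.
  under eq_integral do rewrite normrM EFinM.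
  rewrite integralZl //; last exact: (int_norm Ig).
  by rewrite (EintE measurableT (int_norm Ig)) -EFinM mulrC.
have iPhi : (mu \x nu)%E.-integrable setT Phi.
  apply: (le_integrable measurableT _ _ iPsi).
  - apply/measurable_EFinP; apply: measurable_funM.
      exact: (measurableT_comp mf measurable_fst).
    apply: measurable_funM; last exact: (measurableT_comp mg measurable_snd).
    exact: (measurableT_comp mK (@measurable_swap _ _ X X)).
  - move=> p _ /=; rewrite lee_fin !normrM.
    by apply: ler_wpM2l => //; exact: ler_piMl (normr_ge0 _) (K1 _ _).
have FU := Fubini iPhi.
have LHS : forall x, (f x * Lop (transp K) nu g x)%:E = (\int[nu]_y Phi (x, y))%E.
  move=> x; rewrite /Phi /=.
  under eq_integral do rewrite EFinM.
  rewrite integralZl //; last exact: (intKf x mKt K1t Ig).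
  by rewrite (EintE measurableT (intKf x mKt K1t Ig)) -EFinM.
have RHS : forall y, (Lop K mu f y * g y)%:E = (\int[mu]_x Phi (x, y))%E.
  move=> y; rewrite /Phi /=.
  under eq_integral do rewrite mulrA (mulrC (f _)) EFinM.
  rewrite integralZr //; last exact: (intKf y mK K1 If).
  by rewrite (EintE measurableT (intKf y mK K1 If)) -EFinM.
transitivity (\int[mu]_x \int[nu]_y Phi (x, y))%E.
  by apply: eq_integral => x _; exact: LHS x.
rewrite FU; apply: eq_integral => y _; by rewrite RHS.
Qed.
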